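(* Let $X$ be a $T_0$ space. The following are equivalent: (1) $X$ is $QI_2$-continuous. (2) For every $x\in X$ there exists an irreducible subset $\mathcal F$ of $P_S(X)$ with $\mathcal F\subseteq w(x)$ and $\uparrow x=\bigcap\mathcal F$.
   Context: For a $T_0$ space $X$, the specialization order is $x\le y$ iff $x\in \mathrm{cl}\{y\}$; $\uparrow A=\{x: a\le x\text{ for some } a\in A\}$, $\uparrow x=\uparrow\{x\}$; $A^\uparrow$, $A^\downarrow$ are the sets of upper and lower bounds of $A$, and $A^\delta=(A^\uparrow)^\downarrow$. A nonempty subset $A$ of a space is irreducible if whenever $A\subseteq F_1\cup F_2$ with $F_1,F_2$ closed, $A\subseteq F_1$ or $A\subseteq F_2$. $X^{(<\omega)}$ is the set of nonempty finite subsets of $X$. $P_S(X)$ is the set of nonempty compact saturated (upper) subsets of $X$ with the upper Vietoris topology, basis $\{\square U: U\text{ open}\}$, $\square U=\{Q: Q\subseteq U\}$. For $A\subseteq X$, $x\in X$, $A\ll_{I_2}x$ means: for every irreducible $D\subseteq X$ with $x\in D^\delta$, $A\cap\mathrm{cl}D\ne\emptyset$. For $x\in X$, $w(x)=\{\uparrow F: F\in X^{(<\omega)}, F\ll_{I_2}x\}$. $X$ is $QI_2$-continuous if for every $x\in X$, $w(x)$ is an irreducible subset of $P_S(X)$ and $\uparrow x=\bigcap w(x)$. *)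

(* Defs.v *)
From mathcomp Require Import all_boot all_order.
From mathcomp Require Import all_classical all_reals all_analysis.
Set Implicit Arguments. Unset Strict Implicit. Unset Printing Implicit Defensive.
Local Open Scope classical_set_scope.

Section QI2.
Variable T : topologicalType.

Definition spec_le (x y : T) : Prop := closure [set y] x.

Definition up_set (A : set T) : set T := [set x | exists2 a, A a & spec_le a x].
Definition up_pt (x : T) : set T := up_set [set x].

Definition upper_bounds (A : set T) : set T := [set y | forall a, A a -> spec_le a y].
Definition lower_bounds (A : set T) : set T := [set y | forall a, A a -> spec_le y a].
Definition delta_cut (A : set T) : set T := lower_bounds (upper_bounds A).

Definition irreducible_wrt {U : Type} (closedP : set U -> Prop) (A : set U) : Prop :=
  A !=set0 /\
  forall F1 F2, closedP F1 -> closedP F2 -> A `<=` F1 `|` F2 -> A `<=` F1 \/ A `<=` F2.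

Definition irreducible (A : set T) : Prop := irreducible_wrt closed A.

(* saturated = upper set w.r.t. the specialization order *)
Definition saturated (A : set T) : Prop := up_set A `<=` A.

Definition PS : set (set T) := [set Q | Q !=set0 /\ compact Q /\ saturated Q].

(* upper Vietoris topology on P_S(X): open sets are unions of basic sets
   box U = {Q in P_S(X) | Q `<=` U}, U open in X *)
Definition box (U : set T) : set (set T) := [set Q | PS Q /\ Q `<=` U].

Definition PS_open (O : set (set T)) : Prop :=
  exists I : set (set T), (forall U, I U -> open U) /\
    O = [set Q | exists2 U, I U & box U Q].

Definition PS_closed (C : set (set T)) : Prop :=
  C `<=` PS /\ PS_open (PS `\` C).

Definition PS_irreducible (A : set (set T)) : Prop :=
  A `<=` PS /\ irreducible_wrt PS_closed A.

Definition way_below_I2 (A : set T) (x : T) : Prop :=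
  forall D : set T, irreducible D -> delta_cut D x -> A `&` closure D !=set0.

Definition w (x : T) : set (set T) :=
  [set Q | exists F : set T, [/\ finite_set F, F !=set0, way_below_I2 F x & Q = up_set F]].

Definition QI2_continuous : Prop :=
  forall x : T, PS_irreducible (w x) /\ up_pt x = \bigcap_(Q in w x) Q.

End QI2.

(* Main.v *)
Require Import Defs.
From mathcomp Require Import all_boot all_order.
From mathcomp Require Import all_classical all_reals all_analysis.
Local Open Scope classical_set_scope.

Section S.
Variable X : topologicalType.

Lemma spec_refl (a : X) : spec_le a a.
Proof. exact: subset_closure. Qed.

Lemma spec_trans (a b c : X) : spec_le a b -> spec_le b c -> spec_le a c.
Proof.
move=> hab hbc B; rewrite nbhsE => -[U [oU Ua] UB].
have [y [-> Uy]] := hab U (open_nbhs_nbhs (conj oU Ua)).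
have [z [-> Uz]] := hbc U (open_nbhs_nbhs (conj oU Uy)).
exists c; split; [reflexivity|exact: UB Uz].
Qed.

Lemma up_set_sat (F : set X) : saturated (up_set F).
Proof. move=> y [z [a Fa az] zy]; exists a => //; exact: spec_trans az zy. Qed.

Lemma up_pt_compact (a : X) : compact (up_pt a).
Proof.
move=> G PG Ga; exists a; split; first by exists a => //; exact: spec_refl.
move=> A B GA Ba.
have [y [Ay [b -> hy]]] := filter_ex (filterI GA Ga).
have [z [-> Bz]] := hy B Ba.
by exists y.
Qed.

Lemma up_set_compact (s : seq X) : compact (up_set [set` s]).
Proof.
elim: s => [|a s IH].
  move=> G PG G0; have [y [b]] := filter_ex G0.
  by rewrite /= in_nil.
have -> : up_set [set` (a :: s)] = up_pt a `|` up_set [set` s].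
  apply/seteqP; split => y.
    move=> [b]; rewrite /= in_cons => /orP [/eqP -> hy|bs hy].
      by left; exists a.
    by right; exists b.
  case=> [[b -> hy]| [b bs hy]].
    by exists a => //=; rewrite mem_head.
  by exists b => //=; rewrite in_cons bs orbT.
exact: compactU (up_pt_compact a) IH.
Qed.

Lemma w_PS (x : X) : w x `<=` @PS X.
Proof.
move=> Q [F [fF [a Fa] _ ->]]; split; first by exists a; exists a => //; exact: spec_refl.
split; last exact: up_set_sat.
have [s ->] := (finite_seqP F).1 fF.
exact: up_set_compact.
Qed.


Lemma diamond_closed (E : set X) : closed E ->
  PS_closed [set K | @PS X K /\ K `&` E !=set0].
Proof.
move=> cE; split; first by move=> K [].
exists [set ~` E]; split; first by move=> U ->; exact: closed_openC.
apply/seteqP; split => K.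
  move=> [PSK nm]; exists (~` E) => //; split => // y Ky Ey.
  by apply: nm; split => //; exists y.
move=> [U -> [PSK KU]]; split => //; move=> [_ [y [Ky Ey]]].
exact: KU y Ky Ey.
Qed.

Lemma chain_meet (K C : set X) (F : set (set X)) : compact K -> closed C ->
  total_on F subset ->
  K `&` C !=set0 ->
  (forall V, F V -> closed (C `&` ~` V) /\ K `&` (C `&` ~` V) !=set0) ->
  K `&` (C `&` ~` \bigcup_(V in F) V) !=set0.
Proof.
move=> cK cC tot KC hF.
pose D := [set B : set X | B = C \/ exists2 V, F V & B = C `&` ~` V].
pose G := filter_from D (fun B => K `&` B).
have DC : forall B, D B -> closed B /\ K `&` B !=set0 /\ B `<=` C.
  move=> B; case=> [eB| [V FO eB]]; subst B; first by split => //; split.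
  by have [h1 h2] := hF V FO; split => //; split => // y [].
have FG : Filter G.
  apply: filter_from_filter; first by exists C; left.
  move=> i j Di Dj.
  case: Di => [ei| [W1 FO1 ei]]; subst i.
    exists j => //; move=> y [Ky jy]; have [_ [_ jC]] := DC j Dj.
    by split; split => //; exact: jC.
  case: Dj => [ej| [W2 FO2 ej]]; subst j.
    by exists (C `&` ~` W1); [right; exists W1|move=> y [Ky [Cy Oy]]].
  case: (tot W1 W2 FO1 FO2) => h.
    exists (C `&` ~` W2); first by right; exists W2.
    by move=> y [Ky [Cy Oy]]; split; split => //; split => // /h.
  exists (C `&` ~` W1); first by right; exists W1.
  by move=> y [Ky [Cy Oy]]; split; split => //; split => // /h.
have PG : ProperFilter G.
  apply: filter_from_proper => B DB; by have [_ [? _]] := DC B DB.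
have GK : G K by exists C; [left|move=> y []].
have [p [Kp clp]] := cK G PG GK.
have inB : forall B, D B -> B p.
  move=> B DB; have [cB _] := DC B DB; apply: cB => N Np.
  have [y [[Ky By] Ny]] := clp (K `&` B) N (ex_intro2 _ _ B DB (fun _ h => h)) Np.
  by exists y.
exists p; split => //; split; first by apply: inB; left.
move=> [V FO Op].
have [_ nO] := inB (C `&` ~` V) (or_intror (ex_intro2 _ _ V FO erefl)).
exact: nO Op.
Qed.

Lemma rudin (A : set (set X)) (C : set X) :
  PS_irreducible A -> closed C -> (forall K, A K -> K `&` C !=set0) ->
  exists B, [/\ closed B, B `<=` C, irreducible B & forall K, A K -> K `&` B !=set0].
Proof.
move=> [APS [[K0 AK0] irrA]] cC AC.
pose P := [set V : set X | closed (C `&` ~` V) /\ forall K, A K -> K `&` (C `&` ~` V) !=set0].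
have [V0 [[cB0 mB0] maxV0]] : exists V, P V /\ forall B, V `<` B -> ~ P B.
  apply: Zorn_bigcup => F FP tot; split.
    have -> : C `&` ~` (\bigcup_(V in F) V) = C `&` (\bigcap_(V in F) (C `&` ~` V)).
      apply/seteqP; split => y.
        move=> [Cy nU]; split => // V FV; split => // Vy; apply: nU; by exists V.
      move=> [Cy hI]; split => // -[V FV Vy]; by have [_ /(_ Vy)] := hI V FV.
    apply: closedI => //; apply: closed_bigI => V FV; exact: (FP V FV).1.
  move=> K AK; apply: chain_meet => //.
  - by have [_ [? _]] := APS K AK.
  - exact: AC.
  - by move=> V FV; have [h1 h2] := FP V FV; split => //; exact: h2.
set B0 := C `&` ~` V0.
have minB0 : forall B, closed B -> B `<=` B0 -> (forall K, A K -> K `&` B !=set0) -> B0 `<=` B.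
  move=> B cB BB0 mB.
  have PB : P (~` B).
    rewrite /P /= setCK; split; first exact: closedI.
    move=> K AK; have [y [Ky By]] := mB K AK; exists y; split => //.
    by split => //; exact: (BB0 y By).1.
  have sub : V0 `<=` ~` B by move=> y V0y By; exact: (BB0 y By).2 V0y.
  have nprop : ~ (V0 `<` ~` B) by move=> h; exact: maxV0 _ h PB.
  move=> y [Cy nV0y]; apply: contrapT => nBy.
  apply: nprop; split => // h; exact: nV0y (h y nBy).
exists B0; split => //; first by move=> y [].
split; first by have [y [_ ?]] := mB0 K0 AK0; exists y.
move=> F1 F2 cF1 cF2 B0F.
have cD1 := @diamond_closed (B0 `&` F1) (closedI cB0 cF1).
have cD2 := @diamond_closed (B0 `&` F2) (closedI cB0 cF2).
have AD : A `<=` [set K | @PS X K /\ K `&` (B0 `&` F1) !=set0] `|` [set K | @PS X K /\ K `&` (B0 `&` F2) !=set0].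
  move=> K AK; have [y [Ky By]] := mB0 K AK.
  case: (B0F y By) => Fy; [left|right]; split; try exact: APS; by exists y.
case: (irrA _ _ cD1 cD2 AD) => hA; [left|right].
  have := minB0 (B0 `&` F1) (closedI cB0 cF1) (fun y h => h.1) (fun K AK => (hA K AK).2).
  by move=> h y /h [].
have := minB0 (B0 `&` F2) (closedI cB0 cF2) (fun y h => h.1) (fun K AK => (hA K AK).2).
by move=> h y /h [].
Qed.

Lemma key_closed (FF : set (set X)) (x : X) :
  PS_irreducible FF -> FF `<=` w x -> up_pt x = \bigcap_(Q in FF) Q ->
  forall C, PS_closed C -> FF `<=` C -> w x `<=` C.
Proof.
move=> [FFPS irrFF] FFw e C [CPS [I [Iopen eC]]] FFC Q wQ.
apply: contrapT => nCQ.
have : (@PS X `\` C) Q := conj (w_PS x Q wQ) nCQ.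
rewrite eC => -[U IU [PSQ QU]].
have oU := Iopen U IU.
have notin : forall K, FF K -> K `&` ~` U !=set0.
  move=> K FFK; apply: contrapT => hK.
  have : (@PS X `\` C) K.
    rewrite eC; exists U => //; split; first exact: FFPS.
    move=> y Ky; apply: contrapT => nUy; apply: hK; by exists y.
  by move=> [_]; apply; exact: FFC.
have [B0 [cB0 B0U irrB0 mB0]] := @rudin FF (~` U) (conj FFPS irrFF) (open_closedC oU) notin.
case: wQ => F [fF neF wb eQ].
have dc : delta_cut B0 x.
  move=> y ub.
  have : up_pt x y.
    rewrite e => K FFK; have [d [Kd B0d]] := mB0 K FFK.
    have [_ [_ satK]] := FFPS K FFK.
    by apply: satK; exists d => //; exact: ub d B0d.
  by case=> a ->.
have [a [Fa cla]] := wb B0 irrB0 dc.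
have B0a : B0 a by apply: cB0.
apply: (B0U a B0a); apply: QU; rewrite eQ; exists a => //; exact: spec_refl.
Qed.

Lemma upw (x : X) Q : w x Q -> up_pt x `<=` Q.
Proof.
move=> [F [fF neF wb ->]] y [a -> xy].
have irr1 : irreducible [set x].
  split; first by exists x.
  move=> F1 F2 _ _ h; case: (h x erefl) => hx; [left|right]; by move=> z ->.
have dc : delta_cut [set x] x by move=> y0 ub; exact: ub x erefl.
have [b [Fb clb]] := wb [set x] irr1 dc.
by exists b => //; exact: spec_trans clb xy.
Qed.

End S.

Theorem proposition4p5 (X : topologicalType) :
  kolmogorov_space X ->
  (QI2_continuous X <->
   forall x : X, exists FF : set (set X),
     [/\ PS_irreducible FF, FF `<=` w x & up_pt x = \bigcap_(Q in FF) Q]).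
Proof.
move=> _; split.
  by move=> H x; exists (w x); have [i e] := H x; split.
move=> H x; have [FF [irrFF FFw e]] := H x.
have e2 : up_pt x = \bigcap_(Q in w x) Q.
  apply/seteqP; split => y.
    by move=> hy Q wQ; exact: upw wQ y hy.
  by move=> hy; rewrite e => Q FFQ; exact: hy Q (FFw Q FFQ).
split => //; split; first exact: w_PS.
split.
  have [Q FFQ] := irrFF.2.1; exists Q; exact: FFw.
move=> C1 C2 c1 c2 sub.
case: (irrFF.2.2 C1 C2 c1 c2 (fun Q h => sub Q (FFw Q h))) => h; [left|right];
  exact: key_closed irrFF FFw e _ _ h.
Qed.
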